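(* Let $p$ be a prime, $q=p^r$, $n\ge1$, and let $l$ be an integer with $1\le l\le 2r-1$. Let $\mathscr{C}\subseteq\mathrm{GF}(q^2)^n$ be a scalable code and $\mathscr{B}$ a basis of $\mathrm{GF}(q^2)$ over $\mathrm{GF}(q)$. If there is a power of two which divides $r$ but does not divide $l$, then $\mathrm{Im}_{\mathscr{B}}(\mathscr{C})$ is self-orthogonal w.r.t. $\tilde h_l(x,y)=\sum_{i=1}^{2n}x_iy_i^{p^l}$ on $\mathrm{GF}(q)^{2n}$ if and only if $\mathrm{Tr}(\mathscr{C})$ is self-orthogonal w.r.t. $h_l(x,y)=\sum_{i=1}^n x_iy_i^{p^l}$ on $\mathrm{GF}(q)^n$.
   Context: $\mathrm{Tr}:\mathrm{GF}(q^2)\to\mathrm{GF}(q)$, $\mathrm{Tr}(a)=a+a^q$. The dual basis of a basis $\{\gamma_1,\gamma_2\}$ is the unique basis $\{\beta_1,\beta_2\}$ with $\mathrm{Tr}(\gamma_i\beta_j)=\delta_{ij}$. A code $\mathscr{C}\subseteq\mathrm{GF}(q^2)^n$ is scalable if $x\in\mathscr{C}\Rightarrow\alpha x\in\mathscr{C}$ for all $\alpha\in\mathrm{GF}(q^2)$. For a basis $\mathscr{B}$ with dual basis $\{\beta_1,\beta_2\}$, $\mathrm{Im}_{\mathscr{B}}(\mathscr{C})=\{(\mathrm{Tr}(\beta_1x_1),\ldots,\mathrm{Tr}(\beta_1x_n),\mathrm{Tr}(\beta_2x_1),\ldots,\mathrm{Tr}(\beta_2x_n)):x\in\mathscr{C}\}$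 and $\mathrm{Tr}(\mathscr{C})=\{(\mathrm{Tr}(x_1),\ldots,\mathrm{Tr}(x_n)):x\in\mathscr{C}\}$. A code $D$ is self-orthogonal w.r.t. a form $g$ if $g(x,y)=0$ for all $x,y\in D$. *)

(* Defs.v *)
From HB Require Import structures.
From mathcomp Require Import all_boot all_order all_algebra all_field.
Set Implicit Arguments. Unset Strict Implicit. Unset Printing Implicit Defensive.
Import GRing.Theory.
Local Open Scope ring_scope.

(* K plays the role of GF(q^2); GF(q) is the subfield {a | a^q = a} of K. *)
Definition inGFq (K : finFieldType) (q : nat) (a : K) : bool := a ^+ q == a.

Definition trq (K : finFieldType) (q : nat) (a : K) : K := a + a ^+ q.

(* {g1, g2} is a basis of K over GF(q) (K has dimension 2 over GF(q)) *)
Definition is_basis2 (K : finFieldType) (q : nat) (g1 g2 : K) : Prop :=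
  forall a b : K, inGFq q a -> inGFq q b -> a * g1 + b * g2 = 0 -> a = 0 /\ b = 0.

Definition is_dual_basis (K : finFieldType) (q : nat) (g1 g2 b1 b2 : K) : Prop :=
  [/\ trq q (g1 * b1) = 1, trq q (g1 * b2) = 0,
      trq q (g2 * b1) = 0 & trq q (g2 * b2) = 1].

Definition scalable_code (K : finFieldType) (n : nat) (C : {set 'rV[K]_n}) : Prop :=
  forall (alpha : K) (x : 'rV[K]_n), x \in C -> alpha *: x \in C.

(* Im_B(C), with {b1,b2} the dual basis of B *)
Definition ImB (K : finFieldType) (q n : nat) (b1 b2 : K) (C : {set 'rV[K]_n})
  : {set 'rV[K]_(n + n)} :=
  [set row_mx (map_mx (fun a => trq q (b1 * a)) x)
              (map_mx (fun a => trq q (b2 * a)) x) | x in C].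

Definition TrC (K : finFieldType) (q n : nat) (C : {set 'rV[K]_n}) : {set 'rV[K]_n} :=
  [set map_mx (trq q) x | x in C].

Definition hform (K : finFieldType) (p l m : nat) (x y : 'rV[K]_m) : K :=
  \sum_(i < m) x 0 i * (y 0 i) ^+ (p ^ l).

Definition self_orth (K : finFieldType) (p l m : nat) (D : {set 'rV[K]_m}) : Prop :=
  forall x y, x \in D -> y \in D -> hform p l x y = 0.

(* Main.v *)
Require Import Defs.
From HB Require Import structures.
From mathcomp Require Import all_boot all_order all_algebra all_field.
From mathcomp Require Import ring.
Set Implicit Arguments. Unset Strict Implicit. Unset Printing Implicit Defensive.
Import GRing.Theory.
Local Open Scope ring_scope.

Section S.
Variables (K : finFieldType) (p : nat).
Hypothesis hch : p \in [pchar K].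

Lemma natp m : [pchar K].-nat (p ^ m)%N.
Proof.
rewrite (eq_pnat _ (pcharf_eq hch)) pnatX pnat_id ?orbT //; exact: pcharf_prime hch.
Qed.

Lemma powD m (a b : K) : (a + b) ^+ (p ^ m)%N = a ^+ (p ^ m)%N + b ^+ (p ^ m)%N.
Proof. exact: exprDn_pchar (natp m). Qed.

Lemma powN m (a : K) : (- a) ^+ (p ^ m)%N = - a ^+ (p ^ m)%N.
Proof. exact: exprNn_pchar (natp m). Qed.

Lemma powB m (a b : K) : (a - b) ^+ (p ^ m)%N = a ^+ (p ^ m)%N - b ^+ (p ^ m)%N.
Proof. by rewrite powD powN. Qed.

Lemma pow_inj m (a b : K) : a ^+ (p ^ m)%N = b ^+ (p ^ m)%N -> a = b.
Proof.
move=> /eqP; rewrite -subr_eq0 -powB expf_eq0 subr_eq0 => /andP[_ /eqP] //.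
Qed.

Lemma pow_sum m I (r : seq I) (P : pred I) (F : I -> K) :
  (\sum_(i <- r | P i) F i) ^+ (p ^ m)%N = \sum_(i <- r | P i) F i ^+ (p ^ m)%N.
Proof.
apply: (big_morph (fun x => x ^+ (p ^ m)%N)); first by move=> x y; rewrite powD.
by rewrite expr0n expn_eq0 eqn0Ngt (prime_gt0 (pcharf_prime hch)).
Qed.

Variable r : nat.
Hypothesis hr : (0 < r)%N.
Hypothesis hcard : #|K| = ((p ^ r) ^ 2)%N.
Local Notation Q := (p ^ r)%N.
Local Notation T := (@trq K Q).

Lemma powQQ (a : K) : (a ^+ Q) ^+ Q = a.
Proof. by rewrite -exprM mulnn -hcard expf_card. Qed.

Lemma powC m k (a : K) : (a ^+ m) ^+ k = (a ^+ k) ^+ m.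
Proof. by rewrite -!exprM mulnC. Qed.

Lemma TD a b : T (a + b) = T a + T b.
Proof. rewrite /trq powD; ring. Qed.

Lemma T_sum I (s : seq I) (P : pred I) (F : I -> K) :
  T (\sum_(i <- s | P i) F i) = \sum_(i <- s | P i) T (F i).
Proof. apply: (big_morph T TD); by rewrite /trq expr0n expn_eq0 eqn0Ngt (prime_gt0 (pcharf_prime hch)) addr0. Qed.

Lemma TM c a : c ^+ Q = c -> T (c * a) = c * T a.
Proof. by move=> hc; rewrite /trq exprMn hc mulrDr. Qed.

Lemma E1 l (b x y : K) :
  T (b * x) * (T (b * y)) ^+ (p ^ l)%N =
  T (b * b ^+ (p ^ l)%N * x * y ^+ (p ^ l)%N + b * (b ^+ Q) ^+ (p ^ l)%N * x * (y ^+ Q) ^+ (p ^ l)%N).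
Proof.
rewrite /trq !powD !exprMn ?powD ?exprMn.
rewrite ![(_ ^+ (p ^ l)%N) ^+ Q]powC !powQQ.
set e := (p ^ l)%N.
ring.
Qed.
Definition S1 l n (x y : 'rV[K]_n) := \sum_(i < n) x 0 i * y 0 i ^+ (p ^ l)%N.
Definition S2 l n (x y : 'rV[K]_n) := \sum_(i < n) x 0 i * (y 0 i ^+ Q) ^+ (p ^ l)%N.

Lemma hform_map l n b (x y : 'rV[K]_n) :
  hform p l (map_mx (fun a => T (b * a)) x) (map_mx (fun a => T (b * a)) y) =
  T (b * b ^+ (p ^ l)%N * S1 l x y + b * (b ^+ Q) ^+ (p ^ l)%N * S2 l x y).
Proof.
rewrite /hform /S1 /S2 !mulr_sumr -big_split /= T_sum; apply: eq_bigr => i _.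
by rewrite !mxE E1 !mulrA.
Qed.

Lemma S1Z l n a b (x y : 'rV[K]_n) : S1 l (a *: x) (b *: y) = a * b ^+ (p ^ l)%N * S1 l x y.
Proof.
rewrite /S1 mulr_sumr; apply: eq_bigr => i _; rewrite !mxE exprMn; ring.
Qed.

Lemma S2Z l n a b (x y : 'rV[K]_n) : S2 l (a *: x) (b *: y) = a * (b ^+ Q) ^+ (p ^ l)%N * S2 l x y.
Proof.
rewrite /S2 mulr_sumr; apply: eq_bigr => i _; rewrite !mxE !exprMn; ring.
Qed.

Variable g : K.
Hypothesis hg : g ^+ Q != g.

Lemma F2 s : (forall a, T (a * s) = 0) -> s = 0.
Proof.
move=> H; apply/eqP; apply/contraT => hs.
have h1 := H s^-1; have h2 := H (g / s).
rewrite (mulVf hs) /trq expr1n in h1.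
rewrite -mulrA (mulVf hs) mulr1 /trq in h2.
case/negP: hg; apply/eqP.
have -> : g ^+ Q = - g by apply/eqP; rewrite -subr_eq0 opprK addrC h2.
have -> : - g = - g + (1 + 1) * g by rewrite h1 mul0r addr0.
ring.
Qed.

Lemma Lsep l (u v : K) : (forall b : K, b ^+ (p ^ l)%N * u + (b ^+ Q) ^+ (p ^ l)%N * v = 0) -> u = 0 /\ v = 0.
Proof.
move=> H; have h1 := H 1; have h2 := H g.
rewrite !expr1n !mul1r in h1.
have hv : v = - u by apply/eqP; rewrite -subr_eq0 opprK addrC h1.
rewrite hv in h2.
have hu : (g ^+ (p ^ l)%N - (g ^+ Q) ^+ (p ^ l)%N) * u = 0 by rewrite -h2; ring.
have hne : g ^+ (p ^ l)%N - (g ^+ Q) ^+ (p ^ l)%N != 0.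
  rewrite subr_eq0; apply/eqP => /pow_inj E; move: hg; by rewrite -E eqxx.
move/eqP: hu; rewrite mulf_eq0 (negbTE hne) /= => /eqP hu0.
by rewrite hv hu0 oppr0.
Qed.

Lemma core l n (C : {set 'rV[K]_n}) (hC : scalable_code C) c d (hc : c != 0) (hd : d != 0) :
  (forall x y, x \in C -> y \in C -> T (c * S1 l x y + d * S2 l x y) = 0) <->
  (forall x y, x \in C -> y \in C -> S1 l x y = 0 /\ S2 l x y = 0).
Proof.
split => H x y hx hy; last by case: (H x y hx hy) => -> ->; rewrite !mulr0 addr0 /trq expr0n expn_eq0 eqn0Ngt (prime_gt0 (pcharf_prime hch)) addr0.
have H2 : forall b : K, b ^+ (p ^ l)%N * (c * S1 l x y) + (b ^+ Q) ^+ (p ^ l)%N * (d * S2 l x y) = 0.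
  move=> b; apply: F2 => a.
  have := H _ _ (hC a x hx) (hC b y hy); rewrite S1Z S2Z => <-; congr T; ring.
have [/eqP u0 /eqP v0] := Lsep H2.
move: u0 v0; rewrite !mulf_eq0 (negbTE hc) (negbTE hd) /= => /eqP -> /eqP -> //.
Qed.
End S.

Section NT.
Variables (K : finFieldType) (p : nat).
Hypothesis hch : p \in [pchar K].

Lemma fixM (t : K) a j : t ^+ (p ^ a)%N = t -> t ^+ (p ^ (a * j))%N = t.
Proof.
move=> ha; elim: j => [|j IH]; first by rewrite muln0 expn0 expr1.
by rewrite mulnS expnD exprM ha.
Qed.

Lemma fixsub (t : K) a b : t ^+ (p ^ (a + b))%N = t -> t ^+ (p ^ b)%N = t -> t ^+ (p ^ a)%N = t.
Proof.
move=> hab hb; apply: (pow_inj hch (m := b)); by rewrite -exprM -expnD hab hb.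
Qed.

Lemma fixgcd (t : K) a b : (0 < a)%N -> t ^+ (p ^ a)%N = t -> t ^+ (p ^ b)%N = t ->
  t ^+ (p ^ (gcdn a b))%N = t.
Proof.
move=> a0 ha hb; have [u _ /dvdnP[j hj]] := Bezoutl b a0.
apply: (fixsub (b := (u * b)%N)); last by rewrite mulnC; apply: fixM.
by rewrite hj mulnC; apply: fixM.
Qed.
End NT.

Lemma nt_lemma (r m k : nat) : (0 < r)%N -> (2 ^ k %| r)%N -> ~~ (2 ^ k %| m)%N ->
  (2 * gcdn m r %| r)%N.
Proof.
move=> r0 hr hm.
have g0 : (0 < gcdn m r)%N by rewrite gcdn_gt0 r0 orbT.
have hr' := divnK (dvdn_gcdr m r).
set g := gcdn m r in g0 hr' *; set r' := (r %/ g)%N in hr'.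
case odd_r': (odd r').
  have cop : coprime (2 ^ k) r' by apply: coprimeXl; rewrite coprime2n.
  move: hr; rewrite -hr' mulnC Gauss_dvdl // => hg.
  by move: hm; rewrite (dvdn_trans hg (dvdn_gcdl m r)).
by rewrite -hr' dvdn_pmul2r // dvdn2 odd_r'.
Qed.

Section M.
Variables (K : finFieldType) (p r : nat).
Hypothesis hch : p \in [pchar K].
Hypothesis hr : (0 < r)%N.
Hypothesis hcard : #|K| = ((p ^ r) ^ 2)%N.

Lemma Nlem m k (b1 b2 : K) : (2 ^ k %| r)%N -> ~~ (2 ^ k %| m)%N -> b2 != 0 ->
  b1 * b1 ^+ (p ^ m)%N + b2 * b2 ^+ (p ^ m)%N = 0 ->
  exists2 t : K, t ^+ (p ^ r)%N = t & b1 = t * b2.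
Proof.
move=> hkr hkm hb2 H.
have m0 : (0 < m)%N by move: hkm; case: (m) => //; rewrite dvdn0.
set s := (p ^ m)%N in H.
have s0 : (0 < s)%N by rewrite expn_gt0 (prime_gt0 (pcharf_prime hch)).
exists (b1 / b2); last by rewrite divfK.
set t := b1 / b2.
have hb1 : b1 = t * b2 by rewrite divfK.
clearbody t; subst b1.
have ht : t * t ^+ s = -1.
  have : (t * t ^+ s + 1) * (b2 * b2 ^+ s) = 0 by rewrite -H exprMn; ring.
  move/eqP; rewrite mulf_eq0 mulf_eq0 expf_eq0 (negbTE hb2) andbF /= orbF addr_eq0 => /eqP //.
have t0 : t != 0.
  apply/negP => /eqP t0; move: ht; rewrite t0 mul0r => /eqP; by rewrite eq_sym oppr_eq0 oner_eq0.
have hts : t ^+ s = - t^-1.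
  apply: (mulfI t0); rewrite ht mulrN mulfV //.
have P2m : t ^+ (p ^ (m + m))%N = t.
  rewrite expnD exprM hts (powN hch) exprVn hts invrN invrK opprK //.
have P2r : t ^+ (p ^ (r + r))%N = t.
  by rewrite expnD mulnn -hcard expf_card.
have mm0 : (0 < m + m)%N by rewrite addn_gt0 m0.
have Pg := fixgcd hch mm0 P2m P2r.
rewrite !addnn -!mul2n -muln_gcdr in Pg.
have /dvdnP[j hj] := nt_lemma hr hkr hkm.
by rewrite hj mulnC; apply: fixM.
Qed.
End M.

Lemma hform_row (K : finFieldType) p l n (x1 x2 y1 y2 : 'rV[K]_n) :
  hform p l (row_mx x1 x2) (row_mx y1 y2) = hform p l x1 y1 + hform p l x2 y2.
Proof.
rewrite /hform big_split_ord /=; congr (_ + _); apply: eq_bigr => i _;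
  by rewrite ?row_mxEl ?row_mxEr.
Qed.

Unset Implicit Arguments.

Theorem corollary1 (p r n l : nat) (K : finFieldType)
  (hp : prime p) (hr : (0 < r)%N) (hcard : #|K| = ((p ^ r) ^ 2)%N)
  (hn : (1 <= n)%N) (hl : (1 <= l <= 2 * r - 1)%N)
  (C : {set 'rV[K]_n}) (hC : scalable_code C)
  (g1 g2 b1 b2 : K) (hB : is_basis2 (p ^ r) g1 g2)
  (hdual : is_dual_basis (p ^ r) g1 g2 b1 b2)
  (h2 : exists k : nat, (2 ^ k %| r)%N /\ ~~ (2 ^ k %| l)%N) :
  self_orth p l (ImB (p ^ r) b1 b2 C) <-> self_orth p l (TrC (p ^ r) C).
Proof.
have hch : p \in [pchar K].
  by apply: (card_finPcharP _ hp); rewrite hcard -expnM.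
have Q0 : (0 < p ^ r)%N by rewrite expn_gt0 prime_gt0.
have in0 : inGFq (p ^ r) (0 : K) by rewrite /inGFq expr0n eqn0Ngt Q0.
have in1 : inGFq (p ^ r) (1 : K) by rewrite /inGFq expr1n.
have T0 : trq (p ^ r) (0 : K) = 0 by rewrite /trq expr0n eqn0Ngt Q0 addr0.
have hg2 : g2 != 0.
  apply/negP => /eqP e.
  have [_ h1] : (0:K) = 0 /\ (1:K) = 0 by apply: (hB 0 1 in0 in1); rewrite e mulr0 mul0r addr0.
  by move/eqP: h1; rewrite oner_eq0.
set g := g1 / g2.
have hg : g ^+ (p ^ r)%N != g.
  apply/negP => /eqP e.
  have inN : inGFq (p ^ r) (- g) by rewrite /inGFq (powN hch) e.
  have [h _] : (1:K) = 0 /\ - g = 0.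
    by apply: (hB 1 (- g) in1 inN); rewrite /g mul1r mulNr divfK // subrr.
  by move/eqP: h; rewrite oner_eq0.
case: hdual => d11 d12 d21 d22.
have hb2 : b2 != 0 by apply/negP => /eqP e; move: d22; rewrite e mulr0 T0 => /eqP; rewrite eq_sym oner_eq0.
have nz : forall m, (exists k : nat, (2 ^ k %| r)%N /\ ~~ (2 ^ k %| m)%N) ->
    b1 * b1 ^+ (p ^ m)%N + b2 * b2 ^+ (p ^ m)%N != 0.
  move=> m [k [hk1 hk2]]; apply/negP => /eqP H.
  have [t ht hb1] := Nlem hch hr hcard hk1 hk2 hb2 H.
  move: d11; rewrite hb1 mulrA [g1 * t]mulrC -mulrA (TM _ ht) d12 mulr0 => /eqP.
  by rewrite eq_sym oner_eq0.
set c := b1 * b1 ^+ (p ^ l)%N + b2 * b2 ^+ (p ^ l)%N.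
set d := b1 * (b1 ^+ (p ^ r)%N) ^+ (p ^ l)%N + b2 * (b2 ^+ (p ^ r)%N) ^+ (p ^ l)%N.
have hc : c != 0 by apply: nz.
have hd : d != 0.
  rewrite /d -!exprM -expnD; apply: nz.
  case: h2 => k [hk1 hk2]; exists k; split => //; by rewrite dvdn_addr.
have eqA : self_orth p l (ImB (p ^ r) b1 b2 C) <->
    (forall x y, x \in C -> y \in C -> trq (p ^ r) (c * S1 p l x y + d * S2 p r l x y) = 0).
  split => H.
    move=> x y hx hy; have := H _ _ (imset_f _ hx) (imset_f _ hy).
    rewrite hform_row !(hform_map hch hcard) -(TD hch r) => <-; congr trq; rewrite /c /d; ring.
  move=> u v /imsetP[x hx ->] /imsetP[y hy ->].
  rewrite hform_row !(hform_map hch hcard) -(TD hch r) -(H x y hx hy); congr trq; rewrite /c /d; ring.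
have eqB : self_orth p l (TrC (p ^ r) C) <->
    (forall x y, x \in C -> y \in C -> trq (p ^ r) (1 * S1 p l x y + 1 * S2 p r l x y) = 0).
  have mE : forall x : 'rV[K]_n, map_mx (trq (p ^ r)) x = map_mx (fun a => trq (p ^ r) (1 * a)) x.
    by move=> x; apply/matrixP => i j; rewrite !mxE mul1r.
  split => H.
    move=> x y hx hy; have := H _ _ (imset_f _ hx) (imset_f _ hy).
    by rewrite !mE (hform_map hch hcard) !expr1n !mulr1.
  move=> u v /imsetP[x hx ->] /imsetP[y hy ->].
  by rewrite !mE (hform_map hch hcard) !expr1n !mulr1 H.
rewrite eqA eqB (core hch hg l hC hc hd) (core hch hg l hC (oner_neq0 K) (oner_neq0 K)).
by [].
Qed.
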